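(* Let $\rho\in(0,1)$ and let $\Lambda\ge2$ be an integer. The following are equivalent: (a) there exist real numbers $r_1,\dots,r_{\Lambda-1}$ with $r_{s+1}=\dfrac{[1+(\rho^{-1}+1)r_1]r_s+r_1}{1-\rho^{-1}r_1r_s}$ for $1\le s\le\Lambda-2$ and $\rho^2\le r_1\le\cdots\le r_{\Lambda-1}\le\rho$; (b) the numbers $r_k=\rho\dfrac{X^k-1}{1-\rho X^k}$ with $X=\dfrac{1+\rho}{1+\rho^2}$ satisfy $\rho^2\le r_k\le\rho$ for $1\le k\le\Lambda-1$; (c) the numbers $r_k=\rho\dfrac{X^k-1}{1-\rho X^k}$ with $X=\big(\tfrac{2}{1+\rho}\big)^{1/(\Lambda-1)}$ satisfy $\rho^2\le r_k\le\rho$ for $1\le k\le\Lambda-1$; (d) $(1+\rho)^\Lambda\le2(1+\rho^2)^{\Lambda-1}$; (e) $\rho\le\rho^\star_\Lambda$, where for $\Lambda\ge3$, $\rho^\star_\Lambda$ is the unique solution in $(0,1)$ of $(1+\rho)^\Lambda=2(1+\rho^2)^{\Lambda-1}$ (in particular this solution exists and is unique), and $\rho^\star_2=1$. *)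

(* Defs.v *)
From Stdlib Require Export Reals.
Open Scope R_scope.

Definition rk (rho X : R) (k : nat) : R := rho * (X ^ k - 1) / (1 - rho * X ^ k).

Definition rec_step (rho r1 rs : R) : R :=
  ((1 + (/ rho + 1) * r1) * rs + r1) / (1 - / rho * r1 * rs).

(* Condition (a): there exist r_1,...,r_{Λ-1} (indexed by nat, only indices
   1..Λ-1 matter) satisfying the recursion and ρ^2 ≤ r_1 ≤ ... ≤ r_{Λ-1} ≤ ρ. *)
Definition cond_a (rho : R) (L : nat) : Prop :=
  exists r : nat -> R,
    (forall s : nat, (1 <= s <= L - 2)%nat -> r (S s) = rec_step rho (r 1%nat) (r s)) /\
    rho ^ 2 <= r 1%nat /\
    (forall s : nat, (1 <= s <= L - 2)%nat -> r s <= r (S s)) /\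
    r (L - 1)%nat <= rho.

Definition bounds_rk (rho X : R) (L : nat) : Prop :=
  forall k : nat, (1 <= k <= L - 1)%nat -> rho ^ 2 <= rk rho X k <= rho.

Definition Xb (rho : R) : R := (1 + rho) / (1 + rho ^ 2).
Definition Xc (rho : R) (L : nat) : R := Rpower (2 / (1 + rho)) (/ INR (L - 1)).

Definition star_eq (L : nat) (s : R) : Prop := (1 + s) ^ L = 2 * (1 + s ^ 2) ^ (L - 1).

Definition is_rho_star (L : nat) (s : R) : Prop :=
  (L = 2%nat /\ s = 1) \/ ((3 <= L)%nat /\ 0 < s < 1 /\ star_eq L s).

(* Main.v *)
Require Import Defs.
From Stdlib Require Import Reals Lra Lia Psatz.
Open Scope R_scope.

Definition gt (rho t : R) : R := rho * (t - 1) / (1 - rho * t).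

Lemma pow_lt_strict (x y : R) (n : nat) : 0 <= x -> x < y -> (1 <= n)%nat -> x ^ n < y ^ n.
Proof.
  intros Hx Hxy Hn. destruct n as [|n]; [lia|]. simpl.
  assert (x ^ n <= y ^ n) by (apply pow_incr; lra).
  assert (0 <= x ^ n) by (apply pow_le; lra).
  assert (0 < y ^ n) by (apply pow_lt; lra).
  nra.
Qed.

Lemma gt_alt rho t : 0 < rho < 1 -> 1 - rho * t <> 0 -> gt rho t = -1 + (1 - rho) / (1 - rho * t).
Proof. intros. unfold gt. field. auto. Qed.

Lemma gt_mono rho t1 t2 : 0 < rho < 1 -> t1 <= t2 -> 0 < 1 - rho * t2 -> gt rho t1 <= gt rho t2.
Proof.
  intros Hr H12 Hd.
  assert (0 < 1 - rho * t1) by nra.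
  rewrite !gt_alt by lra.
  apply Rplus_le_compat_l. unfold Rdiv. apply Rmult_le_compat_l. lra.
  apply Rinv_le_contravar; nra.
Qed.

Lemma K rho t : 0 < rho < 1 ->
  (rho ^ 2 <= gt rho t <= rho <-> Xb rho <= t <= 2 / (1 + rho)).
Proof.
  intros Hr. unfold Xb.
  assert (E1 : (1 + rho) / (1 + rho ^ 2) * (1 + rho ^ 2) = 1 + rho) by (field; nra).
  assert (E2 : 2 / (1 + rho) * (1 + rho) = 2) by (field; lra).
  set (xb := (1 + rho) / (1 + rho ^ 2)) in *.
  set (c := 2 / (1 + rho)) in *.
  assert (0 < 1 + rho ^ 2) by nra.
  destruct (Rlt_or_le 0 (1 - rho * t)) as [Hd|Hd].
  - assert (E3 : gt rho t * (1 - rho * t) = rho * (t - 1)) by (unfold gt; field; lra).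
    set (v := gt rho t) in *.
    split; intros [Ha Hb]; split.
    + assert (rho ^ 2 * (1 - rho * t) <= v * (1 - rho * t)) by (apply Rmult_le_compat_r; lra).
      assert (rho * (1 - rho * t) <= t - 1) by nra.
      nra.
    + assert (v * (1 - rho * t) <= rho * (1 - rho * t)) by (apply Rmult_le_compat_r; lra).
      nra.
    + apply (Rmult_le_reg_r (1 - rho * t)); [lra|]. rewrite E3.
      assert (1 + rho <= t * (1 + rho^2)) by nra. nra.
    + apply (Rmult_le_reg_r (1 - rho * t)); [lra|]. rewrite E3. nra.
  - assert (Hv : gt rho t <= 0).
    { unfold gt. destruct (Req_dec (1 - rho * t) 0) as [H0|H0].
      + rewrite H0. unfold Rdiv. rewrite Rinv_0. lra.
      + unfold Rdiv. assert (/ (1 - rho * t) < 0) by (apply Rinv_lt_0_compat; lra).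
        assert (0 <= rho * (t - 1)) by nra. nra. }
    split; intros [Ha Hb].
    + nra.
    + exfalso. nra.
Qed.

Lemma Mden rho X T : 0 < rho < 1 -> 1 - rho * X <> 0 -> 1 - rho * T <> 0 ->
  1 - / rho * gt rho X * gt rho T = (1 - rho) * (1 - rho * (X * T)) / ((1 - rho * X) * (1 - rho * T)).
Proof. intros. unfold gt. field. repeat split; auto; lra. Qed.

Lemma M rho X T : 0 < rho < 1 -> 1 - rho * X <> 0 -> 1 - rho * T <> 0 -> 1 - rho * (X * T) <> 0 ->
  rec_step rho (gt rho X) (gt rho T) = gt rho (X * T).
Proof.
  intros Hr H1 H2 H3. unfold rec_step. rewrite Mden by auto.
  unfold gt. field. repeat split; auto; lra.
Qed.

Lemma c_lt rho : 0 < rho < 1 -> rho * (2 / (1 + rho)) < 1.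
Proof. intros. apply (Rmult_lt_reg_r (1+rho)); [lra|]. field_simplify; lra. Qed.

Lemma Xb_gt1 rho : 0 < rho < 1 -> 1 < Xb rho.
Proof. intros. unfold Xb. apply (Rmult_lt_reg_r (1+rho^2)); [nra|]. field_simplify; nra. Qed.

Lemma XbD rho n : 0 < rho < 1 ->
  (Xb rho ^ n <= 2 / (1 + rho) <-> (1 + rho) ^ (S n) <= 2 * (1 + rho ^ 2) ^ n).
Proof.
  intros Hr.
  assert (HP : 0 < (1 + rho ^ 2) ^ n) by (apply pow_lt; nra).
  assert (E : Xb rho ^ n * (1 + rho ^ 2) ^ n = (1 + rho) ^ n).
  { rewrite <- Rpow_mult_distr. replace (Xb rho * (1 + rho ^ 2)) with (1 + rho); [reflexivity|]. unfold Xb. field. nra. }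
  assert (E2 : 2 / (1 + rho) * (1 + rho) = 2) by (field; lra).
  change ((1 + rho) ^ (S n)) with ((1 + rho) * (1 + rho) ^ n). split; intros H.
  - assert (H0 : Xb rho ^ n * (1 + rho ^ 2) ^ n <= 2 / (1 + rho) * (1 + rho ^ 2) ^ n)
      by (apply Rmult_le_compat_r; lra).
    rewrite E in H0.
    apply Rmult_le_compat_l with (r := 1 + rho) in H0; [|lra].
    replace (2 * (1 + rho ^ 2) ^ n) with ((1 + rho) * (2 / (1 + rho) * (1 + rho ^ 2) ^ n)) by (field; lra).
    exact H0.
  - apply (Rmult_le_reg_r ((1 + rho ^ 2) ^ n)); [lra|]. rewrite E.
    apply (Rmult_le_reg_l (1 + rho)); [lra|].
    replace ((1 + rho) * (2 / (1 + rho) * (1 + rho ^ 2) ^ n)) with (2 * (1 + rho ^ 2) ^ n) by (field; lra).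
    exact H.
Qed.

Lemma bounds_eq rho X n : bounds_rk rho X (S n) <->
  (forall k, (1 <= k <= n)%nat -> rho ^ 2 <= gt rho (X ^ k) <= rho).
Proof. unfold bounds_rk. replace (S n - 1)%nat with n by lia. tauto. Qed.

Lemma partb rho n : 0 < rho < 1 -> (1 <= n)%nat ->
  (bounds_rk rho (Xb rho) (S n) <-> (1 + rho) ^ (S n) <= 2 * (1 + rho ^ 2) ^ n).
Proof.
  intros Hr Hn. rewrite bounds_eq, <- XbD by auto. pose proof (Xb_gt1 rho Hr) as Hxb.
  split.
  - intros H. apply (proj1 (K rho (Xb rho ^ n) Hr) (H n ltac:(lia))).
  - intros H k Hk. apply K; auto. split.
    + rewrite <- (pow_1 (Xb rho)) at 1. apply Rle_pow; lia || lra.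
    + eapply Rle_trans; [|exact H]. apply Rle_pow; lia || lra.
Qed.

Lemma partc rho n : 0 < rho < 1 -> (1 <= n)%nat ->
  (bounds_rk rho (Xc rho (S n)) (S n) <-> (1 + rho) ^ (S n) <= 2 * (1 + rho ^ 2) ^ n).
Proof.
  intros Hr Hn. rewrite bounds_eq, <- XbD by auto. pose proof (Xb_gt1 rho Hr) as Hxb.
  unfold Xc. replace (S n - 1)%nat with n by lia.
  assert (Hc : 1 < 2 / (1 + rho)) by (apply (Rmult_lt_reg_r (1+rho)); [lra|]; field_simplify; lra).
  set (c := 2 / (1 + rho)) in *.
  assert (HX0 : 0 < Rpower c (/ INR n)) by (unfold Rpower; apply exp_pos).
  assert (HXn : Rpower c (/ INR n) ^ n = c).
  { rewrite <- Rpower_pow by auto. rewrite Rpower_mult. rewrite Rinv_l. apply Rpower_1. lra.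
    apply not_0_INR. lia. }
  set (Y := Rpower c (/ INR n)) in *.
  assert (HY1 : 1 <= Y).
  { destruct (Rlt_or_le Y 1); auto. exfalso.
    assert (HH : Y ^ n < 1 ^ n) by (apply pow_lt_strict; auto; lra). rewrite pow1 in HH. lra. }
  split.
  - intros H. assert (Xb rho <= Y).
    { pose proof (proj1 (K rho (Y ^ 1) Hr) (H 1%nat ltac:(lia))). rewrite pow_1 in H0. lra. }
    rewrite <- HXn. apply pow_incr. lra.
  - intros H k Hk. assert (Xb rho <= Y).
    { destruct (Rlt_or_le Y (Xb rho)); auto. exfalso.
      assert (Y ^ n < Xb rho ^ n) by (apply pow_lt_strict; auto; lra). lra. }
    apply K; auto. split.
    + eapply Rle_trans; [exact H0|]. rewrite <- (pow_1 Y) at 1. apply Rle_pow; lia || lra.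
    + change (Y ^ k <= c). rewrite <- HXn. apply Rle_pow; lia || lra.
Qed.

Lemma gt_Xr rho r1 : 0 < rho < 1 -> 0 <= r1 ->
  gt rho ((r1 + rho) / (rho * (1 + r1))) = r1.
Proof. intros. unfold gt. field. repeat split; lra. Qed.

Lemma parta rho n : 0 < rho < 1 -> (1 <= n)%nat ->
  (cond_a rho (S n) <-> (1 + rho) ^ (S n) <= 2 * (1 + rho ^ 2) ^ n).
Proof.
  intros Hr Hn. rewrite <- XbD by auto. pose proof (Xb_gt1 rho Hr) as Hxb.
  pose proof (c_lt rho Hr) as Hcl.
  unfold cond_a. replace (S n - 1)%nat with n by lia. replace (S n - 2)%nat with (n - 1)%nat by lia.
  split.
  - intros [r [Hrec [Hr1 [Hmono Hlast]]]].
    assert (Hup : forall j s, (1 <= s)%nat -> (s + j = n)%nat -> r s <= r n).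
    { induction j as [|j IH]; intros s Hs Hsj.
      - replace s with n by lia. lra.
      - eapply Rle_trans; [apply Hmono; lia|]. apply IH; lia. }
    assert (Hlo : forall s, (1 <= s <= n)%nat -> r 1%nat <= r s).
    { induction s as [|s IH]; intros Hs; [lia|].
      destruct (Nat.eq_dec s 0) as [->|Hs0]; [lra|].
      eapply Rle_trans; [apply IH; lia|]. apply Hmono; lia. }
    assert (Hb : forall s, (1 <= s <= n)%nat -> rho ^ 2 <= r s <= rho).
    { intros s Hs. split.
      - eapply Rle_trans; [exact Hr1|]. apply Hlo; auto.
      - eapply Rle_trans; [|exact Hlast]. apply (Hup (n - s)%nat); lia. }
    assert (Hr0 : 0 <= r 1%nat) by nra.
    set (X := (r 1%nat + rho) / (rho * (1 + r 1%nat))).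
    assert (HX : gt rho X = r 1%nat) by (apply gt_Xr; auto).
    assert (Hform : forall s, (1 <= s <= n)%nat -> r s = gt rho (X ^ s)).
    { induction s as [|s IH]; intros Hs; [lia|].
      destruct (Nat.eq_dec s 0) as [->|Hs0]; [rewrite pow_1; auto|].
      rewrite Hrec by lia. rewrite IH by lia. rewrite <- HX.
      assert (KX : Xb rho <= X <= 2 / (1 + rho)) by (apply K; auto; rewrite HX; apply Hb; lia).
      assert (KT : Xb rho <= X ^ s <= 2 / (1 + rho)) by (apply K; auto; rewrite <- IH by lia; apply Hb; lia).
      assert (D1 : 0 < 1 - rho * X) by nra.
      assert (D2 : 0 < 1 - rho * X ^ s) by nra.
      change (X ^ S s) with (X * X ^ s).
      apply M; try lra.
      intro H0.
      assert (HD := Mden rho X (X ^ s) Hr ltac:(lra) ltac:(lra)).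
      rewrite H0, Rmult_0_r in HD. unfold Rdiv in HD. rewrite Rmult_0_l in HD.
      rewrite HX, <- IH in HD by lia.
      assert (B1 := Hb 1%nat ltac:(lia)). assert (B2 := Hb s ltac:(lia)).
      assert (r 1%nat * r s <= rho * rho) by nra.
      assert (/ rho * r 1%nat * r s <= rho).
      { replace (/ rho * r 1%nat * r s) with ((r 1%nat * r s) / rho) by (field; lra).
        apply (Rmult_le_reg_r rho); [lra|]. field_simplify; nra. }
      lra. }
    assert (KX : Xb rho <= X <= 2 / (1 + rho)).
    { apply K; auto. rewrite HX. apply Hb; lia. }
    assert (Kn : Xb rho <= X ^ n <= 2 / (1 + rho)).
    { apply K; auto. rewrite <- Hform by lia. apply Hb; lia. }
    eapply Rle_trans; [|apply Kn]. apply pow_incr. lra.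
  - intros HD. exists (fun s => gt rho (Xb rho ^ s)).
    assert (Hk : forall k, (1 <= k <= n)%nat -> Xb rho <= Xb rho ^ k <= 2 / (1 + rho)).
    { intros k Hk. split.
      + rewrite <- (pow_1 (Xb rho)) at 1. apply Rle_pow; lia || lra.
      + eapply Rle_trans; [|exact HD]. apply Rle_pow; lia || lra. }
    split; [|split; [|split]].
    + intros s Hs. simpl pow at 2. rewrite Rmult_1_r.
      change (Xb rho ^ S s) with (Xb rho * Xb rho ^ s).
      symmetry. apply M; auto.
      * assert (H1 := Hk 1%nat ltac:(lia)). rewrite pow_1 in H1. nra.
      * assert (H1 := Hk s ltac:(lia)). nra.
      * assert (H1 := Hk (S s) ltac:(lia)). simpl in H1. nra.
    + apply K; auto.
    + intros s Hs. apply gt_mono; auto.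
      * apply Rle_pow; lia || lra.
      * assert (H1 := Hk (S s) ltac:(lia)). nra.
    + apply K; auto.
Qed.
From Coquelicot Require Import Coquelicot.

Definition q (n:nat) (s:R) := (1+s) * ((1+s)/(1+s^2))^n.

Lemma dq m x : is_derive (q (S m)) x (((1+x)/(1+x^2))^m * (1+x)/(1+x^2)^2 * (INR (S m) + 1 - 2 * INR (S m) * x - (INR (S m) - 1) * x^2)).
Proof.
  unfold q. assert (0 < 1 + x^2) by nra.
  auto_derive. lra.
  change (match m with | 0%nat => 1 | S _ => INR m + 1 end) with (INR (S m)).
  unfold Rdiv. replace (x*(x*1)) with (x^2) by ring.
  set (Y := ((1 + x) * / (1 + x ^ 2)) ^ m). field. lra.
Qed.

Lemma incr_closed (f df : R -> R) (a b : R) :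
  (forall x, is_derive f x (df x)) ->
  (forall t, a < t < b -> 0 < df t) ->
  forall x y, a <= x <= b -> a <= y <= b -> x < y -> f x < f y.
Proof.
  intros Hd Hp.
  assert (H: forall x, derivable_pt_lim f x (df x)).
  { intros x. apply is_derive_Reals. apply Hd. }
  pose (pr := (fun x => exist (fun l => derivable_pt_abs f x l) (df x) (H x)) : derivable f).
  intros x y Hx Hy Hxy.
  apply (derive_increasing_interv a b f pr). lra.
  intros t Ht. simpl. apply Hp. auto. auto. auto. auto.
Qed.

Lemma q_cont m : continuity (fun s => q (S m) s - 2).
Proof.
  assert (H: forall x, derivable_pt_lim (fun s => q (S m) s - 2) x
     (((1+x)/(1+x^2))^m * (1+x)/(1+x^2)^2 * (INR (S m) + 1 - 2 * INR (S m) * x - (INR (S m) - 1) * x^2) - 0)).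
  { intros x. apply derivable_pt_lim_minus. apply is_derive_Reals, dq. apply derivable_pt_lim_const. }
  apply derivable_continuous. intros x. exact (exist _ _ (H x)).
Qed.

Definition psi (N s : R) := N + 1 - 2 * N * s - (N - 1) * s ^ 2.

Lemma rho_star m : (1 <= m)%nat ->
  exists z, 0 < z < 1 /\ q (S m) z = 2 /\
    (forall w, 0 < w < 1 -> (q (S m) w <= 2 <-> w <= z)) /\
    (forall w, 0 < w < 1 -> q (S m) w = 2 -> w = z).
Proof.
  intros Hm. set (N := INR (S m)).
  assert (HN : 2 <= N) by (unfold N; rewrite S_INR; assert (1 <= INR m) by (apply (le_INR 1); lia); lra).
  set (S0 := sqrt (2 * N ^ 2 - 1)).
  assert (HS : S0 * S0 = 2 * N ^ 2 - 1) by (apply sqrt_sqrt; nra).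
  assert (HS0 : 0 <= S0) by apply sqrt_pos.
  assert (HSN : N <= S0) by nra.
  set (s0 := (S0 - N) / (N - 1)).
  assert (Hps : psi N s0 = 0).
  { assert (E : (N - 1) * psi N s0 = 2 * N ^ 2 - 1 - S0 * S0) by (unfold psi, s0; field; lra).
    rewrite HS in E. replace (2 * N ^ 2 - 1 - (2 * N ^ 2 - 1)) with 0 in E by ring.
    apply Rmult_integral in E. destruct E; lra. }
  assert (Hs0p : 0 <= s0) by (unfold s0; apply Rdiv_le_0_compat; lra).
  assert (Hpsi : forall s, -1/2 <= s -> (s < s0 -> 0 < psi N s) /\ (s0 < s -> psi N s < 0)).
  { intros s Hs. assert (E : psi N s = psi N s - psi N s0) by lra.
    assert (E2 : psi N s - psi N s0 = - (s - s0) * (2 * N + (N - 1) * (s + s0))) by (unfold psi; ring).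
    assert (0 <= (N - 1) * (s + s0 + 1/2)) by (apply Rmult_le_pos; lra).
    assert (0 < 2 * N + (N - 1) * (s + s0)) by nra.
    split; intros; rewrite E, E2; nra. }
  assert (Hs01 : s0 < 1).
  { destruct (Rlt_or_le s0 1); auto. exfalso.
    assert (psi N 1 = 2 - 2 * N) by (unfold psi; ring).
    assert (E2 : psi N 1 - psi N s0 = - (1 - s0) * (2 * N + (N - 1) * (1 + s0))) by (unfold psi; ring).
    nra. }
  assert (Hs0p' : 0 < s0).
  { destruct (Rle_lt_or_eq_dec 0 s0 Hs0p); auto. rewrite <- e in Hps. unfold psi in Hps. nra. }
  pose (df := fun x => ((1+x)/(1+x^2))^m * (1+x)/(1+x^2)^2 * psi N x).
  assert (Hd : forall x, is_derive (q (S m)) x (df x)) by (intros; apply dq).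
  assert (Hpos : forall x, -1/2 < x -> 0 < ((1+x)/(1+x^2))^m * (1+x)/(1+x^2)^2).
  { intros x Hx. assert (0 < 1 + x^2) by nra. apply Rdiv_lt_0_compat; [|apply pow_lt; lra].
    apply Rmult_lt_0_compat; [|lra]. apply pow_lt. apply Rdiv_lt_0_compat; lra. }
  assert (Inc : forall x y, -1/2 <= x -> x < y -> y <= s0 -> q (S m) x < q (S m) y).
  { intros x y H1 H2 H3. apply (incr_closed _ df (-1/2) s0); auto; try lra.
    intros t Ht. unfold df. apply Rmult_lt_0_compat. apply Hpos; lra. apply Hpsi; lra. }
  assert (Dec : forall x y, s0 <= x -> x < y -> y <= 1 -> q (S m) y < q (S m) x).
  { intros x y H1 H2 H3. cut (- q (S m) x < - q (S m) y); [lra|].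
    apply (incr_closed (fun s => - q (S m) s) (fun s => - df s) s0 1); auto; try lra.
    intros; apply @is_derive_opp; auto.
    intros t Ht. unfold df. assert (0 < ((1+t)/(1+t^2))^m * (1+t)/(1+t^2)^2) by (apply Hpos; lra).
    assert (psi N t < 0) by (apply Hpsi; lra). nra. }
  assert (Q0 : q (S m) 0 = 1).
  { unfold q. replace ((1 + 0) / (1 + 0 ^ 2)) with 1 by field. rewrite pow1. ring. }
  assert (Q1 : q (S m) 1 = 2).
  { unfold q. replace ((1 + 1) / (1 + 1 ^ 2)) with 1 by field. rewrite pow1. ring. }
  assert (Qs0 : 2 < q (S m) s0) by (rewrite <- Q1; apply Dec; lra).
  destruct (IVT (fun s => q (S m) s - 2) 0 s0 (q_cont m) Hs0p') as [z [Hz Hqz]]; try lra.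
  assert (Hz0 : z <> 0) by (intro; subst; lra).
  assert (Hzs : z <> s0) by (intro; subst; lra).
  assert (Big : forall w, z < w < 1 -> 2 < q (S m) w).
  { intros w Hw. destruct (Rle_or_lt w s0).
    - replace 2 with (q (S m) z) by lra. apply Inc; lra.
    - rewrite <- Q1. apply Dec; lra. }
  exists z. split; [lra|]. split; [lra|]. split.
  - intros w Hw. split; intros H.
    + destruct (Rle_or_lt w z); auto. assert (2 < q (S m) w) by (apply Big; lra). lra.
    + destruct (Rle_lt_or_eq_dec w z H). assert (q (S m) w < q (S m) z) by (apply Inc; lra). lra.
      subst. lra.
  - intros w Hw Hq. destruct (Rtotal_order w z) as [H|[H|H]]; auto.
    + assert (q (S m) w < q (S m) z) by (apply Inc; lra). lra.
    + assert (2 < q (S m) w) by (apply Big; lra). lra.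
Qed.

Lemma qrel n s : (1 + s) ^ (S n) = q n s * (1 + s ^ 2) ^ n.
Proof.
  unfold q. rewrite Rmult_assoc, <- Rpow_mult_distr.
  replace ((1 + s) / (1 + s ^ 2) * (1 + s ^ 2)) with (1 + s) by (field; nra). reflexivity.
Qed.

Lemma q_le n s : (1 + s) ^ (S n) <= 2 * (1 + s ^ 2) ^ n <-> q n s <= 2.
Proof.
  rewrite qrel. assert (0 < (1 + s ^ 2) ^ n) by (apply pow_lt; nra).
  split; intros H'. apply (Rmult_le_reg_r ((1 + s ^ 2) ^ n)); lra.
  apply Rmult_le_compat_r; lra.
Qed.

Lemma q_eq n s : star_eq (S n) s <-> q n s = 2.
Proof.
  unfold star_eq. replace (S n - 1)%nat with n by lia. rewrite qrel.
  assert (0 < (1 + s ^ 2) ^ n) by (apply pow_lt; nra).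
  split; intros H'. apply (Rmult_eq_reg_r ((1 + s ^ 2) ^ n)); lra. rewrite H'. reflexivity.
Qed.

Theorem lemma5p6 (rho : R) (L : nat) (Hrho : 0 < rho < 1) (HL : (2 <= L)%nat) :
  ((3 <= L)%nat -> exists! s : R, 0 < s < 1 /\ star_eq L s) /\
  (cond_a rho L <-> bounds_rk rho (Xb rho) L) /\
  (cond_a rho L <-> bounds_rk rho (Xc rho L) L) /\
  (cond_a rho L <-> (1 + rho) ^ L <= 2 * (1 + rho ^ 2) ^ (L - 1)) /\
  (cond_a rho L <-> exists s : R, is_rho_star L s /\ rho <= s).
Proof.
  destruct L as [|n]; [lia|].
  assert (Hn : (1 <= n)%nat) by lia.
  replace (S n - 1)%nat with n by lia.
  rewrite (partb rho n Hrho Hn), (partc rho n Hrho Hn), (parta rho n Hrho Hn).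
  split; [|split; [tauto|split; [tauto|split; [tauto|]]]].
  - intros H3. destruct n as [|m]; [lia|].
    destruct (rho_star m ltac:(lia)) as [z [Hz [Hqz [_ Hu]]]].
    exists z. split. split; auto. apply q_eq; auto.
    intros w [Hw Hst]. symmetry. apply Hu; auto. apply q_eq; auto.
  - rewrite q_le. unfold is_rho_star. destruct n as [|m]; [lia|].
    destruct (Nat.eq_dec m 0) as [->|Hm].
    + split; intros _.
      * exists 1. split; [left; auto|lra].
      * unfold q. simpl. apply (Rmult_le_reg_r (1 + rho * (rho * 1))); [nra|].
        field_simplify; nra.
    + destruct (rho_star m ltac:(lia)) as [z [Hz [Hqz [Hch Hu]]]].
      rewrite (Hch rho Hrho). split.
      * intros H. exists z. split; auto. right. split; [lia|]. split; auto. apply q_eq; auto.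
      * intros [s [[[H1 _]|[_ [Hs Hst]]] Hle]]; [lia|].
        rewrite (Hu s Hs) in Hle; auto. apply q_eq; auto.
Qed.
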